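(* Let $\mathcal X$, $\mathcal Y$, $\mathcal Z$ be finite sets ($\mathcal Y$ the set of collections of intermediate outputs, $\mathcal Z$ the set of final outputs), let $\mathcal S=\mathcal Y\times\mathcal Z$, and write $s=(y,z)\in\mathcal S$. Let $r^*:\mathcal X\times\mathcal Z\to\mathbb R$, $\beta>0$, and let $\mathbb P(z\succ z'\mid x)=\frac{e^{r^*(x,z)}}{e^{r^*(x,z)}+e^{r^*(x,z')}}$ be the Bradley–Terry preference oracle on final outputs. Define the system preference oracle $\mathbb P_{\mathrm{sys}}(s^w\succ s^l\mid x):=\mathbb P(z^w\succ z^l\mid x)$ for $s^w=(y^w,z^w)$, $s^l=(y^l,z^l)$. Let the compound system be a family $\{p_\theta(\cdot\mid x):\theta\in\Theta\}$ of joint conditional distributions on $\mathcal S$, and assume this family contains every conditional distribution on $\mathcal S$ that is strictly positive. Let the reference $p_{\bar\theta}(\cdot\mid x)$ be uniform on $\mathcal S$ for every $x$. Let $\mathcal D$ be the preference distribution obtained by drawing $(x,s,s')$ from a distribution $\mathcal D'$ on $\mathcal X\times\mathcal S\times\mathcal S$ that gives positive probability to every triple (in particular every $s\in\mathcal Y\times\mathcal Z$ is sampled with positive probability), and setting $(s^w,s^l)=(s,s')$ with probability $\mathbb P_{\mathrm{sys}}(s\succ s'\mid x)$ and $(s^w,s^l)=(s',s)$ otherwise. Suppose $\theta^*_{\mathrm{sys}}\in\Theta$ minimizes the SysDPO loss $$L_{\mathrm{Direct}}(\theta)=-\mathbb E_{(x,s^w,s^l)\sim\mathcal D}\Big[\log\sigma\Big(\beta\log\tfrac{p_\theta(s^w\mid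 x)}{p_{\bar\theta}(s^w\mid x)}-\beta\log\tfrac{p_\theta(s^l\mid x)}{p_{\bar\theta}(s^l\mid x)}\Big)\Big],$$ with $\sigma$ the sigmoid. Then the marginal model on final outputs, $p_{\theta^*_{\mathrm{sys}}}(z\mid x)=\sum_{y\in\mathcal Y}p_{\theta^*_{\mathrm{sys}}}(y,z\mid x)$, is $\beta$-perfectly aligned with $\mathbb P$, i.e. for all $x\in\mathcal X$ and $z^w,z^l\in\mathcal Z$, $$\mathbb P(z^w\succ z^l\mid x)=\frac{p_{\theta^*_{\mathrm{sys}}}(z^w\mid x)^\beta}{p_{\theta^*_{\mathrm{sys}}}(z^w\mid x)^\beta+p_{\theta^*_{\mathrm{sys}}}(z^l\mid x)^\beta}.$$
   Context: A generative model $\theta^*$ with conditional distribution $p_{\theta^*}(\cdot\mid x)$ on $\mathcal Z$ is called $\beta$-perfectly aligned (for $\beta>0$) with a preference oracle $\mathbb P(\cdot\succ\cdot\mid x)$ if for all $x\in\mathcal X$ and $z^w,z^l\in\mathcal Z$, $\frac{\mathbb P(z^w\succ z^l\mid x)}{\mathbb P(z^l\succ z^w\mid x)}=\Big(\frac{p_{\theta^*}(z^w\mid x)}{p_{\theta^*}(z^l\mid x)}\Big)^\beta$, equivalently $\mathbb P(z^w\succ z^l\mid x)=\frac{p_{\theta^*}(z^w\mid x)^\beta}{p_{\theta^*}(z^w\mid x)^\beta+p_{\theta^*}(z^l\mid x)^\beta}$. *)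

(* Defs.v *)
From HB Require Import structures.
From mathcomp Require Import all_boot all_order all_algebra.
From mathcomp Require Import all_classical all_reals all_analysis.
Set Implicit Arguments. Unset Strict Implicit. Unset Printing Implicit Defensive.
Import Order.TTheory GRing.Theory Num.Theory.
Local Open Scope ring_scope.

Section SysDPO.
Variables (R : realType) (X Y Z : finType).

Definition BT (rstar : X -> Z -> R) (x : X) (z z' : Z) : R :=
  expR (rstar x z) / (expR (rstar x z) + expR (rstar x z')).

Definition Psys (rstar : X -> Z -> R) (x : X) (s s' : Y * Z) : R :=
  BT rstar x s.2 s'.2.

Definition sigmoid (t : R) : R := 1 / (1 + expR (- t)).

Definition unif_ref (x : X) (s : Y * Z) : R := (#|{: Y * Z}|%:R)^-1.

Definition is_cond_distr (q : X -> Y * Z -> R) : Prop :=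
  (forall x s, 0 <= q x s) /\ (forall x, \sum_(s : Y * Z) q x s = 1).

(* SysDPO loss, as an expectation over D (induced by D' and Psys).
   If the model assigns probability 0 to some s, the loss is +oo
   (log 0 = -oo convention; every s is sampled as winner with positive
   probability). *)
Definition sysdpo_loss (rstar : X -> Z -> R) (beta : R)
    (D' : X -> Y * Z -> Y * Z -> R) (q : X -> Y * Z -> R) : \bar R :=
  if `[< forall x s, 0 < q x s >] then
    let h x s := beta * ln (q x s / unif_ref x s) in
    (- \sum_(x : X) \sum_(s : Y * Z) \sum_(s' : Y * Z)
        D' x s s' * (Psys rstar x s s' * ln (sigmoid (h x s - h x s'))
                   + (1 - Psys rstar x s s') * ln (sigmoid (h x s' - h x s))))%:E
  else +oo%E.

Definition marginalZ (q : X -> Y * Z -> R) (x : X) (z : Z) : R :=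
  \sum_(y : Y) q x (y, z).

End SysDPO.

(* Main.v *)
Require Import Defs.
From HB Require Import structures.
From mathcomp Require Import all_boot all_order all_algebra.
From mathcomp Require Import all_classical all_reals all_analysis.
From mathcomp Require Import ring lra.
Import Order.TTheory GRing.Theory Num.Theory.
Set Implicit Arguments. Unset Strict Implicit.
Local Open Scope ring_scope.

Section Aux.
Variable R : realType.

Lemma ln_le_sub1 {t : R} : 0 < t -> ln t <= t - 1.
Proof.
move=> t0; have := expR_ge1Dx (ln t); rewrite lnK ?posrE //; lra.
Qed.

Lemma ln_lt_sub1 {t : R} : 0 < t -> t != 1 -> ln t < t - 1.
Proof.
move=> t0 t1; have : ln t != 0 by rewrite ln_eq0.
move=> /expR_gt1Dx; rewrite lnK ?posrE //; lra.
Qed.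

Lemma sigmoid_gt0 (d : R) : 0 < sigmoid d.
Proof. by rewrite /sigmoid mul1r invr_gt0 ltr_pwDl ?expR_gt0. Qed.

Lemma sigmoidN (d : R) : sigmoid (- d) = 1 - sigmoid d.
Proof.
rewrite /sigmoid opprK expRN.
have e0 := expR_gt0 d.
field.
by rewrite !lt0r_neq0 // addr_gt0.
Qed.

Lemma sigmoid_lt1 (d : R) : sigmoid d < 1.
Proof. have := sigmoid_gt0 (- d); rewrite sigmoidN; lra. Qed.

Lemma key_ineq (P d : R) : 0 < P -> P < 1 ->
  P * ln (sigmoid d) + (1 - P) * ln (sigmoid (- d))
    <= P * ln P + (1 - P) * ln (1 - P) /\
  (P * ln (sigmoid d) + (1 - P) * ln (sigmoid (- d))
    = P * ln P + (1 - P) * ln (1 - P) -> sigmoid d = P).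
Proof.
move=> P0 P1; rewrite sigmoidN.
set t := sigmoid d.
have t0 : 0 < t by exact: sigmoid_gt0.
have t1 : t < 1 by exact: sigmoid_lt1.
have P1' : 0 < 1 - P by rewrite subr_gt0.
have hA : ln t = ln (t / P) + ln P.
  by rewrite ln_div ?posrE // subrK.
have hB : ln (1 - t) = ln ((1 - t) / (1 - P)) + ln (1 - P).
  by rewrite ln_div ?posrE ?subr_gt0 // subrK.
rewrite hA hB.
have la := ln_le_sub1 (divr_gt0 t0 P0).
have lb : ln ((1 - t) / (1 - P)) <= (1 - t) / (1 - P) - 1.
  by apply: ln_le_sub1; apply: divr_gt0; rewrite subr_gt0.
have e1 : P * ((t / P) - 1) = t - P by field; rewrite lt0r_neq0.
have e2 : (1 - P) * ((1 - t) / (1 - P) - 1) = P - t.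
  by field; rewrite lt0r_neq0.
have ma := ler_wpM2l (ltW P0) la; have mb := ler_wpM2l (ltW P1') lb.
rewrite e1 in ma; rewrite e2 in mb.
split; first by lra.
move=> heq; apply/eqP; apply/negPn/negP => htP.
have ht1 : t / P != 1.
  apply/negP => /eqP h.
  have E : t = P by rewrite -[t](mulfVK (lt0r_neq0 P0)) h mul1r.
  by rewrite E eqxx in htP.
have := ln_lt_sub1 (divr_gt0 t0 P0) ht1.
rewrite -(ltr_pM2l P0) e1 => sa.
lra.
Qed.

Lemma sigmoid_BT (a b : R) : sigmoid (a - b) = expR a / (expR a + expR b).
Proof.
rewrite /sigmoid opprB expRB.
have ea := expR_gt0 a; have eb := expR_gt0 b.
field; rewrite !lt0r_neq0 ?addr_gt0 //.
Qed.

Lemma sigmoid_inj (a b : R) : sigmoid a = sigmoid b -> a = b.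
Proof.
rewrite /sigmoid !mul1r => /(congr1 GRing.inv); rewrite !invrK.
move/addrI/expR_inj; exact: oppr_inj.
Qed.

Lemma sum_le_eq (I : finType) (F G : I -> R) :
  (forall i, F i <= G i) -> \sum_i G i <= \sum_i F i -> forall i, F i = G i.
Proof.
move=> hFG hs i.
have h0 : \sum_i (G i - F i) = 0.
  apply/eqP; rewrite eq_le sumr_ge0 ?andbT; last by move=> j _; rewrite subr_ge0.
  by rewrite sumrB subr_le0.
have hp : forall j, predT j -> 0 <= G j - F j by move=> j _; rewrite subr_ge0.
have := @psumr_eq0P _ I predT (fun j => G j - F j) hp h0 i isT.
by move=> /eqP; rewrite subr_eq0 => /eqP.
Qed.
Lemma eq_le_step (a b : R) : a = b -> a <= b.
Proof. by move->. Qed.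
End Aux.

Section Main.
Variables (R : realType) (X Y Z : finType) (rstar : X -> Z -> R) (beta : R)
  (D' : X -> Y * Z -> Y * Z -> R).

Definition hh (q : X -> Y * Z -> R) x s := beta * ln (q x s / unif_ref R x s).

Definition term (q : X -> Y * Z -> R) x s s' :=
  D' x s s' * (Psys rstar x s s' * ln (sigmoid (hh q x s - hh q x s'))
                   + (1 - Psys rstar x s s') * ln (sigmoid (hh q x s' - hh q x s))).

Lemma loss_pos q : (forall x s, 0 < q x s) ->
  sysdpo_loss rstar beta D' q =
  (- \sum_(x : X) \sum_(s : Y * Z) \sum_(s' : Y * Z) term q x s s')%:E.
Proof. by move=> hq; rewrite /sysdpo_loss asboolT. Qed.

Lemma hh_diff q x s s' : 0 < q x s -> 0 < q x s' -> 0 < #|{: Y * Z}|%:R :> R ->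
  hh q x s - hh q x s' = beta * (ln (q x s) - ln (q x s')).
Proof.
move=> h1 h2 hN; rewrite /hh /unif_ref.
have hu : 0 < (#|{: Y * Z}|%:R : R)^-1 by rewrite invr_gt0.
rewrite !ln_div ?posrE //; ring.
Qed.

End Main.

Theorem theorem1 (R : realType) (X Y Z : finType)
  (rstar : X -> Z -> R) (beta : R) (hbeta : 0 < beta)
  (Theta : Type) (p : Theta -> X -> Y * Z -> R)
  (hp : forall th, is_cond_distr (p th))
  (hfull : forall q : X -> Y * Z -> R,
      (forall x s, 0 < q x s) -> is_cond_distr q ->
      exists th, forall x s, p th x s = q x s)
  (D' : X -> Y * Z -> Y * Z -> R)
  (hD'pos : forall x s s', 0 < D' x s s')
  (hD'sum : \sum_(x : X) \sum_(s : Y * Z) \sum_(s' : Y * Z) D' x s s' = 1)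
  (thstar : Theta)
  (hmin : forall th : Theta,
      (sysdpo_loss rstar beta D' (p thstar) <= sysdpo_loss rstar beta D' (p th))%E) :
  forall (x : X) (zw zl : Z),
    BT rstar x zw zl =
      marginalZ (p thstar) x zw `^ beta /
        (marginalZ (p thstar) x zw `^ beta + marginalZ (p thstar) x zl `^ beta).
Proof.
move=> x0 zw zl.
have [s0 _] : exists s : Y * Z, true.
  case: (pickP (@predT (Y * Z))) => [s _|h0]; first by exists s.
  have := (hp thstar).2 x0; rewrite big_pred0 // => /esym/eqP; rewrite oner_eq0.
  done.
have hN : 0 < #|{: Y * Z}|%:R :> R.
  by rewrite ltr0n; apply/card_gt0P; exists s0.
have hb0 : beta != 0 by rewrite lt0r_neq0.
pose C x := \sum_(s : Y * Z) expR (rstar x s.2 / beta).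
have hC : forall x, 0 < C x.
  move=> x; rewrite /C (bigD1 s0) //=.
  apply: lt_le_trans (expR_gt0 (rstar x s0.2 / beta)) _; rewrite lerDl sumr_ge0 // => *.
pose qs x (s : Y * Z) := expR (rstar x s.2 / beta) / C x.
have qs_pos : forall x s, 0 < qs x s by move=> x s; rewrite divr_gt0 ?expR_gt0.
have qs_distr : is_cond_distr qs.
  rewrite /is_cond_distr.
  split=> [x s|x]; first exact: ltW.
  by rewrite /qs -mulr_suml -/(C x) divff // lt0r_neq0.
have [th hth] := hfull qs qs_pos qs_distr.
have th_pos : forall x s, 0 < p th x s by move=> x s; rewrite hth.
have hBT : forall x z z', 0 < BT rstar x z z' < 1.
  move=> x z z'; rewrite /BT.
  have ea := expR_gt0 (rstar x z); have eb := expR_gt0 (rstar x z').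
  rewrite divr_gt0 ?addr_gt0 //= ltr_pdivrMr ?addr_gt0 // mul1r ltrDl //.
have sig_th : forall x s s', sigmoid (hh beta (p th) x s - hh beta (p th) x s')
    = Psys rstar x s s'.
  move=> x s s'; rewrite hh_diff // !hth /qs !ln_div ?posrE ?expR_gt0 //.
  rewrite !expRK /Psys /BT -sigmoid_BT; congr sigmoid.
  by field.
have term_th : forall x s s', term rstar beta D' (p th) x s s' =
   D' x s s' * (Psys rstar x s s' * ln (Psys rstar x s s')
     + (1 - Psys rstar x s s') * ln (1 - Psys rstar x s s')).
  move=> x s s'; rewrite /term -[hh beta (p th) x s' - hh beta (p th) x s]opprB sigmoidN sig_th //.
have star_pos : forall x s, 0 < p thstar x s.
  have := hmin th; rewrite (loss_pos _ _ _ th_pos) /sysdpo_loss.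
  by case: asboolP => // _; rewrite leye_eq.
have := hmin th; rewrite (loss_pos _ _ _ th_pos) (loss_pos _ _ _ star_pos).
rewrite lee_fin lerN2 => hle.
have le_terms : forall x s s', term rstar beta D' (p thstar) x s s' <=
    term rstar beta D' (p th) x s s'.
  move=> x s s'; rewrite term_th /term -[hh beta (p thstar) x s' - hh beta (p thstar) x s]opprB.
  rewrite ler_wpM2l ?(ltW (hD'pos _ _ _)) //.
  have /andP[P0 P1] := hBT x s.2 s'.2.
  by have [] := key_ineq (hh beta (p thstar) x s - hh beta (p thstar) x s') P0 P1.
have eq1 := sum_le_eq (fun x => ler_sum _ (fun s _ => ler_sum _ (fun s' _ => le_terms x s s'))) hle.
have eq2 := sum_le_eq (fun s => ler_sum _ (fun s' _ => le_terms x0 s s')) (eq_le_step (esym (eq1 x0))).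
have eq3 s := sum_le_eq (fun s' => le_terms x0 s s') (eq_le_step (esym (eq2 s))).
set q := p thstar.
have hd : forall s s', hh beta q x0 s - hh beta q x0 s' = rstar x0 s.2 - rstar x0 s'.2.
  move=> s s'; have := eq3 s s'; rewrite term_th /term.
  rewrite -[hh beta q x0 s' - hh beta q x0 s]opprB.
  move=> /(mulfI (lt0r_neq0 (hD'pos x0 s s'))).
  have /andP[P0 P1] := hBT x0 s.2 s'.2.
  have [_ h2] := key_ineq (hh beta q x0 s - hh beta q x0 s') P0 P1.
  move=> /h2; rewrite /Psys /BT -sigmoid_BT; exact: sigmoid_inj.
have hlog : forall s, ln (q x0 s) = ln (q x0 s0) + (rstar x0 s.2 - rstar x0 s0.2) / beta.
  move=> s; have := hd s s0; rewrite hh_diff // => <-.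
  by field.
pose K := q x0 s0 * expR (- (rstar x0 s0.2 / beta)).
have hq : forall y z, q x0 (y, z) = K * expR (rstar x0 z / beta).
  move=> y z; rewrite -[q x0 (y, z)]lnK ?posrE // hlog expRD lnK ?posrE //.
  rewrite /K mulrBl expRB expRN /=; ring.
have hK : 0 < K by rewrite /K mulr_gt0 ?expR_gt0.
have hY : (0 < #|Y|)%N by apply/card_gt0P; exists s0.1.
have hm : forall z, marginalZ q x0 z = (K *+ #|Y|) * expR (rstar x0 z / beta).
  move=> z; rewrite /marginalZ (eq_bigr _ (fun y _ => hq y z)) sumr_const.
  by rewrite mulrnAl.
have hc : 0 < K *+ #|Y| by rewrite pmulrn_lgt0.
rewrite !hm !powRM ?(ltW hc) ?expR_ge0 // -!expRM !divfK //.
have hcb : 0 < (K *+ #|Y|) `^ beta by rewrite powR_gt0.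
rewrite /BT -mulrDr.
have ea := expR_gt0 (rstar x0 zw); have eb := expR_gt0 (rstar x0 zl).
field; rewrite !lt0r_neq0 ?addr_gt0 //.
Qed.
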